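(* Let $H\in(0,1/2)$, $\lambda,\theta>0$, $a\neq0$, let $$R_Y(\tau)=\theta^2\Big(\frac{\Gamma(2H+1)\cosh(\lambda\tau)}{2\lambda^{2H}}-H\int_0^\tau\cosh(\lambda(\tau-u))\,u^{2H-1}\,\mathsf{d}u\Big),\qquad\tau\ge0,$$ and $R_{Z^{(a)}}(\tau)=\exp(a^2R_Y(0))\big(\exp(a^2R_Y(\tau))-1\big)$, $\tau\ge0$. Then $R_{Z^{(a)}}\in\mathcal{C}^\infty((0,\infty);\mathbb{R})$ and $$R_{Z^{(a)}}(\tau)=c_0-c_1\tau^{2H}+o(\tau^{2H}),\qquad\tau\to0,$$ with $c_0=\exp(a^2R_Y(0))\big(\exp(a^2R_Y(0))-1\big)$ and $c_1=\frac{a^2\theta^2}{2}\exp(2a^2R_Y(0))$.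
   Context: $R_Y$ is the covariance function of the stationary fractional Ornstein–Uhlenbeck process $Y_t=\mu+\theta e^{-\lambda t}\int_{-\infty}^te^{\lambda s}\,\mathsf{d}B_s$ (with $B$ a fractional Brownian motion of Hurst parameter $H$), and $R_{Z^{(a)}}$ is the covariance function of the stationary process $Z^{(a)}_t=e^{a(Y_t-\mu)}$, i.e. $\mathrm{Cov}(Z^{(a)}_s,Z^{(a)}_t)=R_{Z^{(a)}}(|t-s|)$. *)

(* Defs.v *)
From Stdlib Require Import Reals.
From Coquelicot Require Import Coquelicot.
Open Scope R_scope.

Definition Gamma (s : R) : R :=
  RInt_gen (fun t => Rpower t (s - 1) * exp (- t)) (at_right 0) (Rbar_locally p_infty).

Definition R_Y (H lambda theta : R) (tau : R) : R :=
  theta ^ 2 *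
  (Gamma (2 * H + 1) * cosh (lambda * tau) / (2 * Rpower lambda (2 * H))
   - H * RInt_gen (fun u => cosh (lambda * (tau - u)) * Rpower u (2 * H - 1))
                  (at_right 0) (at_point tau)).

Definition R_Z (H lambda theta a : R) (tau : R) : R :=
  exp (a ^ 2 * R_Y H lambda theta 0) * (exp (a ^ 2 * R_Y H lambda theta tau) - 1).

(* Main.v *)
Require Import Defs.
From Stdlib Require Import Lra.
From Stdlib Require Import Reals Lra.
From Coquelicot Require Import Coquelicot.
Open Scope R_scope.

Lemma d_cosh x : is_derive cosh x (sinh x).
Proof. apply is_derive_Reals, derivable_pt_lim_cosh. Qed.
Lemma d_sinh x : is_derive sinh x (cosh x).
Proof. apply is_derive_Reals, derivable_pt_lim_sinh. Qed.
Lemma d_exp x : is_derive exp x (exp x).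
Proof. apply is_derive_Reals, derivable_pt_lim_exp. Qed.
Lemma d_pow r x : 0 < x -> is_derive (fun u => Rpower u r) x (r * Rpower x (r - 1)).
Proof. intro. apply is_derive_Reals, derivable_pt_lim_power; auto. Qed.
Lemma is_derive_eq (f : R -> R) x l l' : is_derive f x l' -> l' = l -> is_derive f x l.
Proof. intros; subst; auto. Qed.

Lemma d_cosh_aff k c x : is_derive (fun u => cosh (k * (c - u))) x (- k * sinh (k * (c - x))).
Proof.
  eapply is_derive_eq.
  apply (is_derive_comp cosh (fun u => k * (c - u))). apply d_cosh.
  auto_derive; auto. unfold scal; simpl; unfold mult; simpl. ring.
Qed.

Lemma loc_pos x : 0 < x -> locally x (fun y => 0 < y).
Proof.
  intro Hx. exists (mkposreal x Hx). intros y Hy.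
  change (Rabs (y - x) < x) in Hy. apply Rabs_def2 in Hy. lra.
Qed.
Lemma loc_neg x : x < 0 -> locally x (fun y => y < 0).
Proof.
  intro Hx. assert (H : 0 < - x) by lra. exists (mkposreal (-x) H). intros y Hy.
  change (Rabs (y - x) < -x) in Hy. apply Rabs_def2 in Hy. lra.
Qed.

Lemma cont_eps (f : R -> R) x : (forall eps, 0 < eps -> exists d, 0 < d /\ forall y, Rabs (y - x) < d -> Rabs (f y - f x) < eps) -> continuous f x.
Proof.
  intro H. apply continuity_pt_filterlim. intros eps Heps.
  destruct (H eps Heps) as [d [Hd Hy]]. exists d. split; auto.
  intros y [_ Hy']. apply Hy. exact Hy'.
Qed.

Lemma Rpower_pos x y : 0 < Rpower x y.
Proof. unfold Rpower; apply exp_pos. Qed.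

Definition pw (s u : R) := if Rlt_dec 0 u then Rpower u s else 0.

Lemma pw_pos s u : 0 < u -> pw s u = Rpower u s.
Proof. intro. unfold pw. destruct (Rlt_dec 0 u); auto; lra. Qed.
Lemma pw_npos s u : u <= 0 -> pw s u = 0.
Proof. intro. unfold pw. destruct (Rlt_dec 0 u); auto; lra. Qed.

Lemma pw_small s : 0 < s -> forall eps, 0 < eps -> exists d, 0 < d /\ forall u, 0 < u < d -> Rpower u s < eps.
Proof.
  intros Hs eps He. exists (Rpower eps (/ s)). split. apply Rpower_pos.
  intros u Hu. replace eps with (Rpower (Rpower eps (/ s)) s).
  apply Rlt_Rpower_l; lra.
  rewrite Rpower_mult. replace (/ s * s) with 1 by (field; lra). apply Rpower_1; auto.
Qed.


Lemma cont_of_der (f : R -> R) x l : is_derive f x l -> continuous f x.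
Proof. intro H. exact (ex_derive_continuous f x (ex_intro _ l H)). Qed.

Lemma pw_cont s : 0 < s -> forall x, continuous (pw s) x.
Proof.
  intros Hs x. destruct (Rlt_dec 0 x) as [Hx|Hx].
  - apply continuous_ext_loc with (fun u => Rpower u s).
    eapply filter_imp. 2: apply (loc_pos x Hx). intros y Hy. simpl. rewrite pw_pos; auto.
    eapply cont_of_der. apply d_pow; auto.
  - destruct (Rlt_dec x 0) as [Hx'|Hx'].
    + apply continuous_ext_loc with (fun u => 0).
      eapply filter_imp. 2: apply (loc_neg x Hx'). intros y Hy. simpl. rewrite pw_npos; auto; lra.
      apply continuous_const.
    + assert (x = 0) by lra. subst x. apply cont_eps. intros eps He.
      destruct (pw_small s Hs eps He) as [d [Hd Hu]]. exists d; split; auto.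
      intros y Hy. rewrite (pw_npos s 0) by lra. rewrite Rminus_0_r.
      destruct (Rlt_dec 0 y).
      * rewrite pw_pos by auto. rewrite Rabs_pos_eq by (left; apply Rpower_pos).
        apply Hu. rewrite Rminus_0_r in Hy. apply Rabs_def2 in Hy. lra.
      * rewrite pw_npos by lra. rewrite Rabs_R0. auto.
Qed.

Lemma Dm (f g : R -> R) x a b : is_derive f x a -> is_derive g x b -> is_derive (fun t => f t * g t) x (a * g x + f x * b).
Proof. intros Ha Hb. apply (is_derive_mult f g x a b Ha Hb). intros; apply Rmult_comm. Qed.
Lemma Dp (f g : R -> R) x a b : is_derive f x a -> is_derive g x b -> is_derive (fun t => f t + g t) x (a + b).
Proof. intros Ha Hb. apply (is_derive_plus f g x a b Ha Hb). Qed.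
Lemma Dmi (f g : R -> R) x a b : is_derive f x a -> is_derive g x b -> is_derive (fun t => f t - g t) x (a - b).
Proof. intros Ha Hb. apply (is_derive_minus f g x a b Ha Hb). Qed.
Lemma Dc (c : R) x : is_derive (fun _ => c) x 0.
Proof. apply (is_derive_const c x). Qed.
Lemma Dcomp (f g : R -> R) x a b : is_derive f (g x) a -> is_derive g x b -> is_derive (fun t => f (g t)) x (a * b).
Proof. intros Ha Hb. eapply is_derive_eq. apply (is_derive_comp f g x a b Ha Hb). unfold scal; simpl; unfold mult; simpl. ring. Qed.
Lemma Cm (f g : R -> R) x : continuous f x -> continuous g x -> continuous (fun t => f t * g t) x.
Proof. intros Ha Hb. apply (continuous_mult f g x Ha Hb). Qed.
Lemma Cp (f g : R -> R) x : continuous f x -> continuous g x -> continuous (fun t => f t + g t) x.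
Proof. intros Ha Hb. apply (continuous_plus f g x Ha Hb). Qed.
Lemma Ccomp (f g : R -> R) x : continuous g x -> continuous f (g x) -> continuous (fun t => f (g t)) x.
Proof. intros Ha Hb. apply (continuous_comp g f x Ha Hb). Qed.
Lemma cont_cosh x : continuous cosh x.
Proof. eapply cont_of_der; apply d_cosh. Qed.
Lemma cont_sinh x : continuous sinh x.
Proof. eapply cont_of_der; apply d_sinh. Qed.
Lemma cont_aff k c x : continuous (fun u => k * (c - u)) x.
Proof. eapply cont_of_der. auto_derive; auto. Qed.

Definition q lam s tau u := sinh (lam * (tau - u)) * pw s u.
Lemma q_cont lam s tau x : 0 < s -> continuous (q lam s tau) x.
Proof.
  intro Hs. unfold q. apply Cm. apply (Ccomp sinh (fun u => lam * (tau - u))). apply cont_aff. apply cont_sinh.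
  apply pw_cont; auto.
Qed.
Lemma q_int lam s tau a b : 0 < s -> ex_RInt (q lam s tau) a b.
Proof. intro Hs. apply (ex_RInt_continuous (V:=R_CompleteNormedModule)). intros; apply q_cont; auto. Qed.

Lemma D_RInt_low (g : R -> R) b x : (forall z, continuous g z) -> is_derive (fun u => RInt g u b) x (- g x).
Proof.
  intro Hc. apply (is_derive_RInt' g (fun u => RInt g u b) x b).
  apply filter_forall. intros. apply (RInt_correct (V:=R_CompleteNormedModule)). apply (ex_RInt_continuous (V:=R_CompleteNormedModule)). intros; auto.
  auto.
Qed.
Lemma D_RInt_up (g : R -> R) a x : (forall z, continuous g z) -> is_derive (fun u => RInt g a u) x (g x).
Proof.
  intro Hc. apply (is_derive_RInt g (fun u => RInt g a u) a x).
  apply filter_forall. intros. apply (RInt_correct (V:=R_CompleteNormedModule)). apply (ex_RInt_continuous (V:=R_CompleteNormedModule)). intros; auto.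
  auto.
Qed.

Definition Fp lam s tau u := cosh (lam * (tau - u)) * pw s u / s - lam / s * RInt (q lam s tau) u tau.

Lemma Fp_der lam s tau x : 0 < s -> 0 < x -> is_derive (Fp lam s tau) x (cosh (lam * (tau - x)) * Rpower x (s - 1)).
Proof.
  intros Hs Hx.
  apply is_derive_ext_loc with (f := fun u => cosh (lam * (tau - u)) * Rpower u s * / s - lam / s * RInt (q lam s tau) u tau).
  eapply filter_imp. 2: apply (loc_pos x Hx). intros y Hy. unfold Fp. rewrite pw_pos; auto.
  eapply is_derive_eq.
  apply Dmi. apply (Dm (fun u => cosh (lam * (tau - u)) * Rpower u s) (fun _ => / s)).
  apply Dm. apply d_cosh_aff. apply d_pow; auto. apply Dc.
  apply (Dm (fun _ => lam / s) (fun u => RInt (q lam s tau) u tau)). apply Dc.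
  apply D_RInt_low. intros; apply q_cont; auto.
  unfold q. rewrite pw_pos by auto.
  replace (Rpower x s) with (Rpower x (s - 1) * x).
  match goal with |- ?a = ?b => change (a = b :> R) end. field. lra.
  rewrite <- (Rpower_1 x) at 2 by auto. rewrite <- Rpower_plus. f_equal; ring.
Qed.

Lemma Cc (c x : R) : continuous (fun _ : R => c) x.
Proof. apply continuous_const. Qed.
Lemma Cmi (f g : R -> R) x : continuous f x -> continuous g x -> continuous (fun t => f t - g t) x.
Proof. intros Ha Hb. apply (continuous_minus f g x Ha Hb). Qed.

Lemma Fp_cont lam s tau x : 0 < s -> continuous (Fp lam s tau) x.
Proof.
  intro Hs. unfold Fp. apply Cmi.
  apply (Cm (fun u => cosh (lam * (tau - u)) * pw s u) (fun _ => / s)). 2: apply Cc.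
  apply Cm. apply (Ccomp cosh (fun u => lam * (tau - u))). apply cont_aff. apply cont_cosh. apply pw_cont; auto.
  apply Cm. apply Cc. eapply cont_of_der. apply D_RInt_low. intros; apply q_cont; auto.
Qed.

Definition ff lam s tau u := cosh (lam * (tau - u)) * Rpower u (s - 1).

Lemma ff_cont lam s tau x : 0 < x -> continuous (ff lam s tau) x.
Proof.
  intro Hx. unfold ff. apply Cm. apply (Ccomp cosh (fun u => lam * (tau - u))). apply cont_aff. apply cont_cosh.
  eapply cont_of_der. apply d_pow; auto.
Qed.

Lemma fprod_pos tau (P : R * R -> Prop) : 0 < tau ->
  (forall a, 0 < a -> P (a, tau)) -> filter_prod (at_right 0) (at_point tau) P.
Proof.
  intros Ht HP. apply Filter_prod with (fun a => 0 < a) (fun b => b = tau).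
  unfold at_right, within. apply filter_forall. auto. reflexivity.
  intros x y Hx Hy. subst y. auto.
Qed.

Lemma J_is lam s tau : 0 < s -> 0 < tau ->
  is_RInt_gen (ff lam s tau) (at_right 0) (at_point tau) (Rpower tau s / s + lam / s * RInt (q lam s tau) 0 tau).
Proof.
  intros Hs Ht.
  apply is_RInt_gen_ext with (Derive (Fp lam s tau)).
  apply fprod_pos; auto. intros a Ha x Hx. simpl in Hx.
  apply is_derive_unique. apply Fp_der; auto.
  assert (0 < Rmin a tau) by (apply Rmin_glb_lt; auto). lra.
  replace (Rpower tau s / s + lam / s * RInt (q lam s tau) 0 tau) with (Fp lam s tau tau - Fp lam s tau 0).
  apply is_RInt_gen_Derive.
  - apply fprod_pos; auto. intros a Ha x Hx. simpl in Hx.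
    assert (0 < Rmin a tau) by (apply Rmin_glb_lt; auto).
    exists (cosh (lam * (tau - x)) * Rpower x (s - 1)). apply Fp_der; auto. lra.
  - apply fprod_pos; auto. intros a Ha x Hx. simpl in Hx.
    assert (0 < Rmin a tau) by (apply Rmin_glb_lt; auto).
    apply continuous_ext_loc with (ff lam s tau).
    eapply filter_imp. 2: apply (loc_pos x); lra.
    intros y Hy. symmetry. apply is_derive_unique. apply Fp_der; auto.
    apply ff_cont. lra.
  - eapply filterlim_filter_le_1. apply filter_le_within. apply Fp_cont; auto.
  - intros P HP. unfold filtermap, at_point. apply locally_singleton. exact HP.
  - unfold Fp. rewrite (pw_npos s 0) by lra. rewrite (pw_pos s tau) by auto.
    rewrite RInt_point. replace (lam * (tau - tau)) with 0 by ring. rewrite cosh_0.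
    unfold zero; simpl. field. lra.
Qed.

Lemma J_val lam s tau : 0 < s -> 0 < tau ->
  RInt_gen (ff lam s tau) (at_right 0) (at_point tau) = Rpower tau s / s + lam / s * RInt (q lam s tau) 0 tau.
Proof.
  intros. apply (is_RInt_gen_unique (V:=R_CompleteNormedModule)). apply J_is; auto.
Qed.

Lemma iota_empty (P : R -> Prop) : (forall x, ~ P x) -> iota P = 0.
Proof.
  intros HP. unfold iota, lim. simpl. unfold R_complete_lim.
  replace (Lub_Rbar _) with p_infty. reflexivity.
  symmetry. apply is_lub_Rbar_unique. split. intros x _. now simpl.
  intros b Hb. destruct b; simpl; auto.
  specialize (Hb (r+1)). simpl in Hb. assert (r + 1 <= r). apply Hb. intros x Hx. now destruct (HP x). lra.
  specialize (Hb 0). simpl in Hb. apply Hb. intros x Hx. now destruct (HP x).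
Qed.

Lemma cosh_ge1 x : 1 <= cosh x.
Proof. unfold cosh. pose proof (exp_ineq1_le x). pose proof (exp_ineq1_le (- x)). lra. Qed.

Lemma J0 lam s : 0 < s < 1 -> RInt_gen (ff lam s 0) (at_right 0) (at_point 0) = 0.
Proof.
  intros Hs. unfold RInt_gen. apply iota_empty. intros l Hl.
  unfold is_RInt_gen, filterlimi, filter_le, filtermapi in Hl.
  specialize (Hl (fun _ => True) (filter_true)).
  destruct Hl as [Q R' HQ HR HQR].
  destruct HQ as [eps HQ].
  set (a := eps / 2).
  assert (Ha : 0 < a) by (unfold a; destruct eps; simpl; lra).
  assert (HQa : Q a). apply HQ. change (Rabs (a - 0) < eps). rewrite Rminus_0_r, Rabs_pos_eq by lra. unfold a; destruct eps; simpl in *; lra. auto.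
  destruct (HQR a 0 HQa HR) as [y [Hy _]]. simpl in Hy.
  destruct (ex_RInt_ub (ff lam s 0) a 0 (ex_intro _ y Hy)) as [M HM].
  set (e := s - 1). assert (He : e < 0) by (unfold e; lra).
  set (b := Rpower (Rabs M + 1) (/ e)).
  set (t := Rmin a b).
  assert (Hb : 0 < b) by apply Rpower_pos.
  assert (Ht : 0 < t) by (apply Rmin_glb_lt; auto).
  assert (Htb : t <= b) by apply Rmin_r.
  assert (Hta : t <= a) by apply Rmin_l.
  specialize (HM t). rewrite Rmin_right, Rmax_left in HM by lra.
  specialize (HM (conj (Rlt_le _ _ Ht) Hta)).
  assert (Hpe : Rpower b e = Rabs M + 1).
  { unfold b. rewrite Rpower_mult. replace (/ e * e) with 1 by (field; lra). apply Rpower_1.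
    pose proof (Rabs_pos M); lra. }
  assert (Hmono : Rpower b e <= Rpower t e).
  { assert (Hinv: forall x, Rpower x e = / Rpower x (- e)).
    { intros; rewrite <- Rpower_Ropp, Ropp_involutive; auto. }
    rewrite !Hinv.
    apply Rinv_le_contravar. apply Rpower_pos. apply Rle_Rpower_l; lra. }
  assert (Hf : Rpower t e <= ff lam s 0 t).
  { unfold ff. fold e. pose proof (cosh_ge1 (lam * (0 - t))). pose proof (Rpower_pos t e). nra. }
  change (Rabs (ff lam s 0 t) <= M) in HM.
  pose proof (Rle_abs (ff lam s 0 t)). pose proof (Rle_abs M). lra.
Qed.

Lemma lin_small (f : R -> R) x l : derivable_pt_lim f x l -> forall eps, 0 < eps ->
  exists d, 0 < d /\ forall h, Rabs h < d -> Rabs (f (x + h) - f x - l * h) <= eps * Rabs h.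
Proof.
  intros Hd eps He. destruct (Hd eps He) as [d Hd']. exists d. split. apply cond_pos.
  intros h Hh. destruct (Req_dec h 0) as [H0|H0].
  - subst h. rewrite Rplus_0_r. replace (f x - f x - l * 0) with 0 by ring. rewrite Rabs_R0. lra.
  - replace (f (x + h) - f x - l * h) with (h * ((f (x + h) - f x) / h - l)) by (field; auto).
    rewrite Rabs_mult. specialize (Hd' h H0 Hh). pose proof (Rabs_pos_lt h H0). nra.
Qed.

Lemma lim0 (g : R -> R) : (forall eps, 0 < eps -> exists d, 0 < d /\ forall t, 0 < t < d -> Rabs (g t) <= eps) ->
  filterlim g (at_right 0) (locally 0).
Proof.
  intros H P [eps HP]. destruct (H (eps / 2)) as [d [Hd Hg]]. destruct eps; simpl; lra.
  exists (mkposreal d Hd). intros y Hy Hy0. apply HP.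
  change (Rabs (g y - 0) < eps). rewrite Rminus_0_r.
  change (Rabs (y - 0) < d) in Hy. rewrite Rminus_0_r, Rabs_pos_eq in Hy by lra.
  specialize (Hg y (conj Hy0 Hy)). destruct eps; simpl in *; lra.
Qed.

Lemma asym (Y P : R -> R) (Y0 k c : R) :
  (forall t, 0 < t -> 0 < P t) ->
  (forall eta, 0 < eta -> exists d, 0 < d /\ forall t, 0 < t < d -> P t < eta) ->
  (forall eta, 0 < eta -> exists d, 0 < d /\ forall t, 0 < t < d -> Rabs (Y t - Y0 + c * P t) <= eta * P t) ->
  filterlim (fun t => (exp (k * Y0) * (exp (k * Y t) - 1) - (exp (k * Y0) * (exp (k * Y0) - 1) - k * c * exp (2 * k * Y0) * P t)) / P t)
    (at_right 0) (locally 0).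
Proof.
  intros Ppos Psmall Esmall. apply lim0. intros eps Heps.
  set (K := exp (2 * k * Y0)). assert (HK : 0 < K) by apply exp_pos.
  set (B := Rabs k * (1 + Rabs c)). assert (HB : 0 <= B) by (unfold B; pose proof (Rabs_pos k); pose proof (Rabs_pos c); nra).
  set (e1 := eps / (2 * K * (B + 1))). assert (He1 : 0 < e1) by (unfold e1; apply Rdiv_lt_0_compat; nra).
  destruct (lin_small exp 0 (exp 0) (derivable_pt_lim_exp 0) e1 He1) as [de [Hde Hexp]].
  rewrite exp_0 in Hexp.
  set (eta := eps / (2 * K * (Rabs k + 1))). assert (Heta : 0 < eta) by (unfold eta; apply Rdiv_lt_0_compat; pose proof (Rabs_pos k); nra).
  destruct (Esmall 1 Rlt_0_1) as [d1 [Hd1 HE1]].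
  destruct (Esmall eta Heta) as [d2 [Hd2 HE2]].
  destruct (Psmall (de / (B + 1))) as [d3 [Hd3 HP3]]. apply Rdiv_lt_0_compat; lra.
  exists (Rmin d1 (Rmin d2 d3)). split. repeat apply Rmin_glb_lt; auto.
  intros t [Ht0 Ht]. 
  assert (Ht1 : t < d1) by (eapply Rlt_le_trans; [exact Ht| apply Rmin_l]).
  assert (Ht2 : t < d2) by (eapply Rlt_le_trans; [exact Ht| eapply Rle_trans; [apply Rmin_r | apply Rmin_l]]).
  assert (Ht3 : t < d3) by (eapply Rlt_le_trans; [exact Ht| eapply Rle_trans; [apply Rmin_r | apply Rmin_r]]).
  specialize (Ppos t Ht0). set (p := P t) in *. set (E := Y t - Y0 + c * p) in *.
  specialize (HE1 t (conj Ht0 Ht1)). specialize (HE2 t (conj Ht0 Ht2)). specialize (HP3 t (conj Ht0 Ht3)).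
  fold p E in HE1, HE2, HP3.
  set (y := k * (Y t - Y0)).
  assert (Hy : Rabs y <= B * p).
  { unfold y, B. replace (Y t - Y0) with (E - c * p) by (unfold E; ring).
    rewrite Rabs_mult. pose proof (Rabs_pos k).
    assert (Rabs (E - c * p) <= (1 + Rabs c) * p).
    { eapply Rle_trans. apply Rabs_triang. rewrite Rabs_Ropp, Rabs_mult, (Rabs_pos_eq p) by lra. lra. }
    nra. }
  assert (Hyd : Rabs y < de).
  { eapply Rle_lt_trans. exact Hy. apply Rmult_lt_reg_r with (/ (B + 1)). apply Rinv_0_lt_compat; lra.
    replace (de * / (B + 1)) with (de / (B + 1)) by reflexivity.
    eapply Rle_lt_trans. 2: exact HP3. apply Rmult_le_reg_r with (B + 1). lra.
    field_simplify; try lra. }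
  specialize (Hexp y Hyd). rewrite Rplus_0_l in Hexp.
  replace (exp (k * Y0) * (exp (k * Y t) - 1) - (exp (k * Y0) * (exp (k * Y0) - 1) - k * c * K * p))
    with (K * ((exp y - 1 - 1 * y) + k * E)).
  2:{ unfold K, y, E. replace (2 * k * Y0) with (k * Y0 + k * Y0) by ring. rewrite !exp_plus.
      replace (k * Y t) with (k * Y0 + k * (Y t - Y0)) by ring. rewrite exp_plus. ring. }
  unfold Rdiv. rewrite Rabs_mult, Rabs_mult, (Rabs_pos_eq K) by lra.
  rewrite Rabs_inv, (Rabs_pos_eq p) by lra.
  assert (Habs : Rabs (exp y - 1 - 1 * y + k * E) <= e1 * (B * p) + Rabs k * (eta * p)).
  { eapply Rle_trans. apply Rabs_triang. rewrite Rabs_mult. pose proof (Rabs_pos k). pose proof (Rabs_pos y).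
    apply Rplus_le_compat. eapply Rle_trans. exact Hexp. apply Rmult_le_compat_l; lra.
    apply Rmult_le_compat_l; lra. }
  apply Rmult_le_reg_r with p. lra.
  rewrite Rmult_assoc, Rinv_l, Rmult_1_r by lra.
  assert (K * (e1 * (B * p) + Rabs k * (eta * p)) <= eps * p).
  { replace (K * (e1 * (B * p) + Rabs k * (eta * p))) with ((K * e1 * B + K * Rabs k * eta) * p) by ring.
    apply Rmult_le_compat_r. lra.
    assert (K * e1 * B <= eps / 2).
    { unfold e1. replace (K * (eps / (2 * K * (B + 1))) * B) with (eps / 2 * (B / (B + 1))) by (field; lra).
      assert (B / (B + 1) <= 1). apply Rmult_le_reg_r with (B + 1). lra. field_simplify; lra. nra. }
    assert (K * Rabs k * eta <= eps / 2).
    { unfold eta. pose proof (Rabs_pos k).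
      replace (K * Rabs k * (eps / (2 * K * (Rabs k + 1)))) with (eps / 2 * (Rabs k / (Rabs k + 1))) by (field; lra).
      assert (Rabs k / (Rabs k + 1) <= 1). apply Rmult_le_reg_r with (Rabs k + 1). lra. field_simplify; lra. nra. }
    lra. }
  eapply Rle_trans. 2: exact H. apply Rmult_le_compat_l; lra.
Qed.

Lemma exp_le x y : x <= y -> exp x <= exp y.
Proof. intro H. destruct (Rle_lt_or_eq_dec _ _ H). left; apply exp_increasing; auto. subst; lra. Qed.

Lemma sinh_sub x y : sinh (x - y) = sinh x * cosh y - cosh x * sinh y.
Proof.
  unfold sinh, cosh. replace (x - y) with (x + - y) by ring. replace (- (x + - y)) with (- x + y) by ring.
  rewrite !exp_plus. field.
Qed.

Lemma RY0 H lam th : 0 < H < 1 / 2 ->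
  R_Y H lam th 0 = th ^ 2 * (Gamma (2 * H + 1) / (2 * Rpower lam (2 * H))).
Proof.
  intro HH. unfold R_Y.
  change (fun u => cosh (lam * (0 - u)) * Rpower u (2 * H - 1)) with (ff lam (2 * H) 0).
  rewrite J0 by lra. rewrite Rmult_0_r, cosh_0. field.
  pose proof (Rpower_pos lam (2 * H)). lra.
Qed.

Lemma RYpos H lam th t : 0 < H < 1 / 2 -> 0 < t ->
  R_Y H lam th t = th ^ 2 * (Gamma (2 * H + 1) * cosh (lam * t) / (2 * Rpower lam (2 * H))
     - H * (Rpower t (2 * H) / (2 * H) + lam / (2 * H) * RInt (q lam (2 * H) t) 0 t)).
Proof.
  intros HH Ht. unfold R_Y.
  change (fun u => cosh (lam * (t - u)) * Rpower u (2 * H - 1)) with (ff lam (2 * H) t).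
  rewrite J_val by lra. reflexivity.
Qed.

Definition g1 lam s u := cosh (lam * u) * pw s u.
Definition g2 lam s u := sinh (lam * u) * pw s u.

Lemma g1_cont lam s x : 0 < s -> continuous (g1 lam s) x.
Proof. intro. unfold g1. apply Cm. apply (Ccomp cosh (fun u => lam * u)). eapply cont_of_der; auto_derive; auto. apply cont_cosh. apply pw_cont; auto. Qed.
Lemma g2_cont lam s x : 0 < s -> continuous (g2 lam s) x.
Proof. intro. unfold g2. apply Cm. apply (Ccomp sinh (fun u => lam * u)). eapply cont_of_der; auto_derive; auto. apply cont_sinh. apply pw_cont; auto. Qed.

Lemma q_split lam s t : 0 < s ->
  RInt (q lam s t) 0 t = sinh (lam * t) * RInt (g1 lam s) 0 t - cosh (lam * t) * RInt (g2 lam s) 0 t.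
Proof.
  intro Hs.
  assert (E1 : ex_RInt (g1 lam s) 0 t) by (apply (ex_RInt_continuous (V:=R_CompleteNormedModule)); intros; apply g1_cont; auto).
  assert (E2 : ex_RInt (g2 lam s) 0 t) by (apply (ex_RInt_continuous (V:=R_CompleteNormedModule)); intros; apply g2_cont; auto).
  rewrite (RInt_ext (q lam s t) (fun u => sinh (lam * t) * g1 lam s u - cosh (lam * t) * g2 lam s u)).
  apply is_RInt_unique.
  apply (is_RInt_minus (V:=R_NormedModule) (fun u => sinh (lam * t) * g1 lam s u) (fun u => cosh (lam * t) * g2 lam s u)).
  apply (is_RInt_scal (V:=R_NormedModule) (g1 lam s)). apply (RInt_correct (V:=R_CompleteNormedModule)); auto.
  apply (is_RInt_scal (V:=R_NormedModule) (g2 lam s)). apply (RInt_correct (V:=R_CompleteNormedModule)); auto.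
  intros x _. unfold q, g1, g2.
  replace (lam * (t - x)) with (lam * t - lam * x) by ring. rewrite sinh_sub. match goal with |- ?u = ?v => change (u = v :> R) end. ring.
Qed.

Inductive C : (R -> R) -> Prop :=
| Cc_ c : C (fun _ => c)
| Ccosh k : C (fun x => cosh (k * x))
| Csinh k : C (fun x => sinh (k * x))
| Cpow r : C (fun x => Rpower x r)
| Cint g : (forall z, continuous g z) -> C g -> C (fun t => RInt g 0 t)
| Cplus f g : C f -> C g -> C (fun x => f x + g x)
| Cmult f g : C f -> C g -> C (fun x => f x * g x)
| Cexp f : C f -> C (fun x => exp (f x))
| Cext f g : C f -> (forall x, 0 < x -> f x = g x) -> C g.

Ltac rring := match goal with |- ?u = ?v => change (u = v :> R) end; ring.

Lemma D_lin k x : is_derive (fun u => k * u) x k.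
Proof. eapply is_derive_eq. auto_derive; auto. rring. Qed.

Lemma C_der f : C f -> exists f', C f' /\ forall x, 0 < x -> is_derive f x (f' x).
Proof.
  induction 1.
  - exists (fun _ => 0). split. apply Cc_. intros; apply Dc.
  - exists (fun x => k * sinh (k * x)). split. apply (Cmult (fun _ => k)). apply Cc_. apply Csinh.
    intros x _. eapply is_derive_eq. apply (Dcomp cosh (fun u => k * u)). apply d_cosh. apply D_lin. rring.
  - exists (fun x => k * cosh (k * x)). split. apply (Cmult (fun _ => k)). apply Cc_. apply Ccosh.
    intros x _. eapply is_derive_eq. apply (Dcomp sinh (fun u => k * u)). apply d_sinh. apply D_lin. rring.
  - exists (fun x => r * Rpower x (r - 1)). split. apply (Cmult (fun _ => r)). apply Cc_. apply Cpow.
    intros; apply d_pow; auto.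
  - exists g. split; auto. intros; apply D_RInt_up; auto.
  - destruct IHC1 as [f' [Hf1 Hf2]]. destruct IHC2 as [g' [Hg1 Hg2]].
    exists (fun x => f' x + g' x). split. apply Cplus; auto. intros; apply Dp; auto.
  - destruct IHC1 as [f' [Hf1 Hf2]]. destruct IHC2 as [g' [Hg1 Hg2]].
    exists (fun x => f' x * g x + f x * g' x). split. apply Cplus; apply Cmult; auto.
    intros; apply Dm; auto.
  - destruct IHC as [f' [Hf1 Hf2]].
    exists (fun x => exp (f x) * f' x). split. apply Cmult; auto. apply Cexp; auto.
    intros; apply (Dcomp exp f). apply d_exp. auto.
  - destruct IHC as [f' [Hf1 Hf2]]. exists f'. split; auto.
    intros x Hx. apply is_derive_ext_loc with f. eapply filter_imp. 2: apply (loc_pos x Hx).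
    intros; auto. auto.
Qed.

Lemma C_Dn f : C f -> forall n, exists g, C g /\ forall x, 0 < x -> Derive_n f n x = g x.
Proof.
  intros Hf n. induction n.
  - exists f. split; auto.
  - destruct IHn as [g [Hg Heq]]. destruct (C_der g Hg) as [g' [Hg' Hd]].
    exists g'. split; auto. intros x Hx. simpl.
    rewrite (Derive_ext_loc _ g). apply is_derive_unique. auto.
    eapply filter_imp. 2: apply (loc_pos x Hx). intros; auto.
Qed.

Lemma C_smooth f : C f -> forall n x, 0 < x -> ex_derive_n f n x.
Proof.
  intros Hf n x Hx. destruct n. simpl; auto.
  simpl. destruct (C_Dn f Hf n) as [g [Hg Heq]]. destruct (C_der g Hg) as [g' [_ Hd]].
  apply ex_derive_ext_loc with g. eapply filter_imp. 2: apply (loc_pos x Hx). intros; symmetry; auto.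
  exists (g' x). auto.
Qed.

Lemma g_C lam s : 0 < s -> C (g1 lam s) /\ C (g2 lam s).
Proof.
  intro Hs. split.
  - apply Cext with (fun u => cosh (lam * u) * Rpower u s). apply Cmult. apply Ccosh. apply Cpow.
    intros; unfold g1; rewrite pw_pos; auto.
  - apply Cext with (fun u => sinh (lam * u) * Rpower u s). apply Cmult. apply Csinh. apply Cpow.
    intros; unfold g2; rewrite pw_pos; auto.
Qed.

Lemma RZ_C H lam th a : 0 < H < 1 / 2 -> C (R_Z H lam th a).
Proof.
  intros HH. set (s := 2 * H). assert (Hs : 0 < s) by (unfold s; lra).
  set (G := Gamma (2 * H + 1)). set (L := Rpower lam s). assert (HL : 0 < L) by apply Rpower_pos.
  set (K0 := exp (a ^ 2 * R_Y H lam th 0)).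
  destruct (g_C lam s Hs) as [Cg1 Cg2].
  apply Cext with (fun x => K0 * (exp (a ^ 2 * (th ^ 2 * (G / (2 * L) * cosh (lam * x) + ((- H / s) * Rpower x s
       + ((- H * lam / s) * (sinh (lam * x) * RInt (g1 lam s) 0 x) + (H * lam / s) * (cosh (lam * x) * RInt (g2 lam s) 0 x))))))
       + -1)).
  - repeat first [apply Cc_ | apply Ccosh | apply Csinh | apply Cpow | apply Cexp | apply Cplus | apply Cmult ].
    apply Cint; auto. intros; apply g1_cont; auto.
    apply Cint; auto. intros; apply g2_cont; auto.
  - intros x Hx. unfold R_Z. fold K0. rewrite (RYpos H lam th x HH Hx). fold s G L.
    rewrite q_split by auto. match goal with |- _ * (exp ?X + _) = _ * (exp ?Y - _) => replace X with Y end. ring.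
    unfold G, s. field. lra.
Qed.

Lemma cosh_small lam : forall eta, 0 < eta -> exists d, 0 < d /\ forall t, 0 < t < d -> Rabs (cosh (lam * t) - 1) <= eta * t.
Proof.
  intros eta He. assert (Hl1 : 0 < Rabs lam + 1) by (pose proof (Rabs_pos lam); lra).
  destruct (lin_small cosh 0 (sinh 0) (derivable_pt_lim_cosh 0) (eta / (Rabs lam + 1))) as [d [Hd Hl]].
  apply Rdiv_lt_0_compat; lra.
  exists (d / (Rabs lam + 1)). split. apply Rdiv_lt_0_compat; lra.
  intros t Ht. specialize (Hl (lam * t)).
  rewrite Rplus_0_l, cosh_0, sinh_0, Rmult_0_l, Rminus_0_r in Hl.
  assert (Hat : Rabs (lam * t) = Rabs lam * t) by (rewrite Rabs_mult, (Rabs_pos_eq t); lra).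
  rewrite Hat in Hl.
  assert (Rabs lam * t < d).
  { apply Rle_lt_trans with ((Rabs lam + 1) * t). nra.
    replace d with ((Rabs lam + 1) * (d / (Rabs lam + 1))) by (field; lra). apply Rmult_lt_compat_l; lra. }
  eapply Rle_trans. apply Hl; auto.
  replace (eta / (Rabs lam + 1) * (Rabs lam * t)) with (eta * t * (Rabs lam / (Rabs lam + 1))) by (field; lra).
  assert (Rabs lam / (Rabs lam + 1) <= 1).
  { apply Rmult_le_reg_r with (Rabs lam + 1). lra. field_simplify; lra. }
  assert (0 <= Rabs lam / (Rabs lam + 1)) by (apply Rmult_le_pos; [apply Rabs_pos | left; apply Rinv_0_lt_compat; lra]).
  assert (0 < eta * t) by nra. nra.
Qed.

Lemma Rpower_1_base x : Rpower 1 x = 1.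
Proof. unfold Rpower. rewrite ln_1, Rmult_0_r, exp_0. auto. Qed.

Lemma t_le_ts t s : 0 < t < 1 -> 0 < s < 1 -> t <= Rpower t s.
Proof.
  intros Ht Hs.
  assert (E : t = Rpower t (1 - s) * Rpower t s).
  { rewrite <- Rpower_plus. replace (1 - s + s) with 1 by ring. rewrite Rpower_1; lra. }
  assert (Rpower t (1 - s) <= 1).
  { apply Rle_trans with (Rpower 1 (1 - s)). apply Rle_Rpower_l; lra. rewrite Rpower_1_base; lra. }
  pose proof (Rpower_pos t s). rewrite E at 1. nra.
Qed.

Lemma sinh_bound x : 0 <= x -> Rabs (sinh x) <= exp x.
Proof.
  intro Hx. unfold sinh. pose proof (exp_pos (- x)). assert (exp (- x) <= exp x) by (apply exp_le; lra).
  rewrite Rabs_pos_eq. pose proof (exp_pos x). lra. lra.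
Qed.

Lemma q_bound lam s t : 0 < lam -> 0 < s -> 0 < t ->
  Rabs (RInt (q lam s t) 0 t) <= t * (exp (lam * t) * Rpower t s).
Proof.
  intros Hl Hs Ht. replace (t * (exp (lam * t) * Rpower t s)) with ((t - 0) * (exp (lam * t) * Rpower t s)) by ring.
  apply abs_RInt_le_const. lra. apply q_int; auto.
  intros u Hu. unfold q. rewrite Rabs_mult.
  assert (H1 : Rabs (sinh (lam * (t - u))) <= exp (lam * t)).
  { eapply Rle_trans. apply sinh_bound. nra. apply exp_le. nra. }
  assert (H2 : Rabs (pw s u) <= Rpower t s).
  { destruct (Rlt_dec 0 u). rewrite pw_pos, Rabs_pos_eq by (auto; left; apply Rpower_pos).
    apply Rle_Rpower_l; lra. rewrite pw_npos, Rabs_R0 by lra. left; apply Rpower_pos. }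
  apply Rmult_le_compat; auto; apply Rabs_pos.
Qed.

Lemma E_small H lam th : 0 < H < 1 / 2 -> 0 < lam ->
  forall eta, 0 < eta -> exists d, 0 < d /\ forall t, 0 < t < d ->
    Rabs (R_Y H lam th t - R_Y H lam th 0 + th ^ 2 / 2 * Rpower t (2 * H)) <= eta * Rpower t (2 * H).
Proof.
  intros HH Hl eta He.
  set (s := 2 * H). assert (Hs : 0 < s < 1) by (unfold s; lra).
  set (G := Gamma (s + 1)). set (L := Rpower lam s). assert (HL : 0 < L) by apply Rpower_pos.
  set (A := Rabs (G / (2 * L))). set (w := th ^ 2). assert (Hw : 0 <= w) by (unfold w; nra).
  assert (HA : 0 <= A) by apply Rabs_pos.
  set (B := w * lam / 2 * exp lam). assert (HB : 0 <= B) by (unfold B; pose proof (exp_pos lam); assert (0 <= w * lam) by nra; assert (0 <= w * lam / 2) by lra; nra).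
  destruct (cosh_small lam (eta / (2 * (w * A + 1)))) as [dc [Hdc Hc]].
  apply Rdiv_lt_0_compat; nra.
  exists (Rmin (Rmin dc 1) (eta / (2 * (B + 1)))). split.
  repeat apply Rmin_glb_lt; try lra. apply Rdiv_lt_0_compat; lra.
  intros t [Ht0 Ht].
  assert (Htc : t < dc) by (eapply Rlt_le_trans; [exact Ht | eapply Rle_trans; [apply Rmin_l | apply Rmin_l]]).
  assert (Ht1 : t < 1) by (eapply Rlt_le_trans; [exact Ht | eapply Rle_trans; [apply Rmin_l | apply Rmin_r]]).
  assert (Hte : t < eta / (2 * (B + 1))) by (eapply Rlt_le_trans; [exact Ht | apply Rmin_r]).
  rewrite (RYpos H lam th t HH Ht0), (RY0 H lam th HH). fold s G L w.
  set (p := Rpower t s). assert (Hp : 0 < p) by apply Rpower_pos.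
  set (I := RInt (q lam s t) 0 t).
  assert (Hsimp : w * (G * cosh (lam * t) / (2 * L) - H * (p / s + lam / s * I)) - w * (G / (2 * L)) + w / 2 * p
      = w * (G / (2 * L)) * (cosh (lam * t) - 1) - w * lam / 2 * I).
  { unfold s. field. lra. }
  rewrite Hsimp.
  assert (Hc' := Hc t (conj Ht0 Htc)).
  assert (HI : Rabs I <= t * (exp (lam * t) * p)) by (apply q_bound; lra).
  assert (Hexp : exp (lam * t) <= exp lam) by (apply exp_le; nra).
  assert (Htp : t <= p) by (apply t_le_ts; lra).
  eapply Rle_trans. apply Rabs_triang. rewrite Rabs_Ropp, !Rabs_mult.
  rewrite (Rabs_pos_eq w) by auto. fold A.
  replace (Rabs (w * lam / 2)) with (w * lam / 2) by (rewrite Rabs_pos_eq; auto; nra).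
  assert (T1 : w * A * Rabs (cosh (lam * t) - 1) <= eta / 2 * p).
  { apply Rle_trans with (w * A * (eta / (2 * (w * A + 1)) * t)). apply Rmult_le_compat_l; nra.
    replace (w * A * (eta / (2 * (w * A + 1)) * t)) with (eta / 2 * t * (w * A / (w * A + 1))) by (field; nra).
    assert (w * A / (w * A + 1) <= 1) by (apply Rmult_le_reg_r with (w * A + 1); [nra | field_simplify; nra]).
    assert (0 <= w * A / (w * A + 1)) by (apply Rmult_le_pos; [nra | left; apply Rinv_0_lt_compat; nra]).
    apply Rle_trans with (eta / 2 * t). rewrite <- (Rmult_1_r (eta / 2 * t)) at 2. apply Rmult_le_compat_l; auto. left; apply Rmult_lt_0_compat; lra. apply Rmult_le_compat_l; lra. }
  assert (T2 : w * lam / 2 * Rabs I <= eta / 2 * p).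
  { apply Rle_trans with (w * lam / 2 * (t * (exp lam * p))). apply Rmult_le_compat_l. nra.
    apply Rle_trans with (t * (exp (lam * t) * p)); auto. apply Rmult_le_compat_l; [lra | apply Rmult_le_compat_r; lra].
    replace (w * lam / 2 * (t * (exp lam * p))) with (B * t * p) by (unfold B; ring).
    assert (B * t <= eta / 2).
    { apply Rle_trans with ((B + 1) * t). nra.
      replace (eta / 2) with ((B + 1) * (eta / (2 * (B + 1)))) by (field; lra). apply Rmult_le_compat_l; lra. }
    nra. }
  lra.
Qed.

Theorem lemma3 (H lambda theta a : R) :
  0 < H < 1 / 2 -> 0 < lambda -> 0 < theta -> a <> 0 ->
  (* R_Z is C^infty on (0, oo) *)
  (forall (n : nat) (tau : R), 0 < tau -> ex_derive_n (R_Z H lambda theta a) n tau) /\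
  (* R_Z(tau) = c0 - c1 tau^(2H) + o(tau^(2H)) as tau -> 0+ *)
  (let c0 := exp (a ^ 2 * R_Y H lambda theta 0) * (exp (a ^ 2 * R_Y H lambda theta 0) - 1) in
   let c1 := a ^ 2 * theta ^ 2 / 2 * exp (2 * a ^ 2 * R_Y H lambda theta 0) in
   filterlim
     (fun tau => (R_Z H lambda theta a tau - (c0 - c1 * Rpower tau (2 * H))) / Rpower tau (2 * H))
     (at_right 0) (locally 0)).
Proof.
  intros HH Hl Hth Ha. split.
  - intros n tau Ht. apply C_smooth; auto. apply RZ_C; auto.
  - intros c0 c1. unfold c0, c1.
    eapply filterlim_ext.
    2: apply (asym (R_Y H lambda theta) (fun t => Rpower t (2 * H)) (R_Y H lambda theta 0) (a ^ 2) (theta ^ 2 / 2)).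
    + intros t. cbv beta. unfold R_Z. unfold Rdiv. ring.
    + intros; apply Rpower_pos.
    + apply pw_small. lra.
    + intros eta He. apply E_small; auto.
Qed.
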